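(* Let $A$ be a finite alphabet and let $Z\subseteq A^+$ be a code all of whose words have length at least $2$. If all words of $Z$ begin with the same letter of $A$, or all words of $Z$ end with the same letter of $A$, then $Z$ is an alt-induced code.
   Context: $A^+$ is the set of non-empty words over $A$. A set $Z\subseteq A^+$ is a code if every word admits at most one factorization into words of $Z$. For non-empty $X,Y\subseteq A^+$, $(X,Y)$ is an alternative code if no word of $A^+$ admits two different similar alternative factorizations on $(X,Y)$, where an alternative factorization is a factorization $u_1\cdots u_n$ ($n\ge 2$, $u_i\in X\cup Y$) with consecutive factors alternating between $X$ and $Y$, and two are similar if they begin in the same set and end in the same set; equivalently, $XY$ is a code and each $z\in XY$ has exactly one pair $(x,y)\in X\times Y$ with $z=xy$. $Z$ is an alt-induced code if $Z=XY$ for some alternative code $(X,Y)$. *)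

(* Defs.v *)
From mathcomp Require Import all_boot.
Set Implicit Arguments. Unset Strict Implicit. Unset Printing Implicit Defensive.

Section Words.
Variable A : finType.

Definition lang := seq A -> Prop.

Definition in_plus (Z : lang) : Prop := forall w, Z w -> w <> [::].

Definition factors_in (Z : lang) (l : seq (seq A)) : Prop :=
  forall u, u \in l -> Z u.

Definition is_code (Z : lang) : Prop :=
  in_plus Z /\
  forall l1 l2 : seq (seq A),
    factors_in Z l1 -> factors_in Z l2 -> flatten l1 = flatten l2 -> l1 = l2.

Fixpoint alt_fac (X Y : lang) (b : bool) (l : seq (seq A)) : Prop :=
  match l with
  | [::] => True
  | u :: l' => (if b then X u else Y u) /\ alt_fac X Y (~~ b) l'
  end.

(* label (true = X, false = Y) of the set containing the last factor of an
   alternating factorization starting in set b *)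
Definition end_label (b : bool) (l : seq (seq A)) : bool :=
  if odd (size l) then b else ~~ b.

Definition alt_code (X Y : lang) : Prop :=
  (exists x, X x) /\ (exists y, Y y) /\ in_plus X /\ in_plus Y /\
  forall (b : bool) (l1 l2 : seq (seq A)),
    2 <= size l1 -> 2 <= size l2 ->
    alt_fac X Y b l1 -> alt_fac X Y b l2 ->
    end_label b l1 = end_label b l2 ->
    flatten l1 = flatten l2 -> l1 = l2.

Definition prod_lang (X Y : lang) : lang :=
  fun w => exists x y, X x /\ Y y /\ w = x ++ y.

Definition alt_induced (Z : lang) : Prop :=
  exists X Y : lang, alt_code X Y /\ forall w, Z w <-> prod_lang X Y w.

End Words.

(* Main.v *)
Require Import Defs.
From mathcomp Require Import all_boot.
Set Implicit Arguments. Unset Strict Implicit.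

Section S.
Variable A : finType.
Implicit Types (X Y Z : seq A -> Prop).

Fixpoint pairs (l : seq (seq A)) : seq (seq A) :=
  match l with x :: y :: r => (x ++ y) :: pairs r | _ => [::] end.

Lemma alt_rcons X Y b l u :
  alt_fac X Y b (rcons l u) <->
  alt_fac X Y b l /\ (if (if odd (size l) then ~~ b else b) then X u else Y u).
Proof.
elim: l b => [|v l IH] b /=; first by split; [case=> H _; split | case=> _ H; split].
have := IH (~~ b); case: (odd (size l)); case: b; rewrite /=; tauto.
Qed.

Lemma pairs_ok X Y Z l :
  (forall w, Z w <-> prod_lang X Y w) ->
  alt_fac X Y true l -> ~~ odd (size l) ->
  flatten (pairs l) = flatten l /\ factors_in Z (pairs l).
Proof.
move=> HZ; move: {2}(size l) (leqnn (size l)) => n; elim: n l => [|n IH] l.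
  by case: l => //= _ _ _; split => // u.
case: l => [|x [|y r]] //=.
rewrite negbK => Hs [Hx [Hy Hr]] Ho.
  have [F1 F2] := IH r (ltnW Hs) Hr Ho.
  split; first by rewrite F1 catA.
  move=> u; rewrite inE => /orP [/eqP -> | /F2 //].
  by apply/HZ; exists x, y.
Qed.

Lemma pairs_inj X Y l1 l2 :
  (forall x x' y y', X x -> X x' -> Y y -> Y y' -> x ++ y = x' ++ y' -> x = x' /\ y = y') ->
  alt_fac X Y true l1 -> alt_fac X Y true l2 ->
  ~~ odd (size l1) -> ~~ odd (size l2) -> pairs l1 = pairs l2 -> l1 = l2.
Proof.
move=> Cn; move: {2}(size l1) (leqnn (size l1)) => n; elim: n l1 l2 => [|n IH] l1 l2.
  case: l1 => //= _ _; case: l2 => [|x [|y r]] //=.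
case: l1 => [|x [|y r]] //=.
- by case: l2 => [|x [|y r]] //=.
- rewrite negbK => Hs [Hx [Hy Hr]]; case: l2 => [|x' [|y' r']] //=.
  rewrite negbK => [[Hx' [Hy' Hr']]] Ho Ho' [E1 E2].
  have [-> ->] := Cn _ _ _ _ Hx Hx' Hy Hy' E1.
  by rewrite (IH r r') // ltnW.
Qed.

Lemma G X Y Z l1 l2 :
  is_code Z ->
  (forall w, Z w <-> prod_lang X Y w) ->
  (forall x x' y y', X x -> X x' -> Y y -> Y y' -> x ++ y = x' ++ y' -> x = x' /\ y = y') ->
  alt_fac X Y true l1 -> alt_fac X Y true l2 ->
  ~~ odd (size l1) -> ~~ odd (size l2) -> flatten l1 = flatten l2 -> l1 = l2.
Proof.
move=> [_ Hc] HZ Cn H1 H2 O1 O2 Ef.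
have [F1 P1] := pairs_ok HZ H1 O1.
have [F2 P2] := pairs_ok HZ H2 O2.
apply: (pairs_inj Cn) => //; apply: Hc => //.
by rewrite F1 F2.
Qed.

Lemma endl_odd b (l1 l2 : seq (seq A)) : end_label b l1 = end_label b l2 -> odd (size l1) = odd (size l2).
Proof.
rewrite /end_label; case: (odd (size l1)); case: (odd (size l2)) => //; by case: b.
Qed.

Lemma cats1_inj (u v : seq A) a : u ++ [:: a] = v ++ [:: a] -> u = v.
Proof. rewrite !cats1; exact: rcons_injl. Qed.

End S.

Theorem corollaryC (A : finType) (Z : seq A -> Prop) :
  is_code Z ->
  (exists z, Z z) ->
  (forall z, Z z -> 2 <= size z) ->
  ((exists a : A, forall z, Z z -> exists s, z = a :: s) \/
   (exists a : A, forall z, Z z -> exists s, z = rcons s a)) ->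
  alt_induced Z.
Proof.
move=> Hc [z0 Hz0] Hsz [[a Ha] | [a Ha]].
- pose X := fun x : seq A => x = [:: a].
  pose Y := fun y => Z (a :: y).
  have HZ : forall w, Z w <-> prod_lang X Y w.
    move=> w; split.
      move=> Hw; have [s Es] := Ha _ Hw; exists [:: a], s; split => //.
      by split; [rewrite /Y -Es | rewrite Es].
    by move=> [x [y [-> [Hy ->]]]].
  have Cn : forall x x' y y', X x -> X x' -> Y y -> Y y' -> x ++ y = x' ++ y' -> x = x' /\ y = y'.
    by move=> x x' y y' -> -> _ _ [].
  have GG := G Hc HZ Cn.
  have Godd : forall l1 l2, alt_fac X Y true l1 -> alt_fac X Y true l2 ->
      odd (size l1) = odd (size l2) -> flatten l1 = flatten l2 -> l1 = l2.
    move=> l1 l2 H1 H2 Eo Ef.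
    case O1: (odd (size l1)); last by apply: GG => //; rewrite ?O1 // -Eo O1.
    have O2 : odd (size l2) by rewrite -Eo O1.
    move: H1 H2 Ef Eo O1 O2.
    case: (lastP l1) => [|r1 u1] //; case: (lastP l2) => [|r2 u2] //.
    rewrite !size_rcons /= => /alt_rcons [H1 Hu1] /alt_rcons [H2 Hu2] Ef Eo.
    move=> Q1 Q2.
    rewrite (negbTE Q1) /= in Hu1; rewrite (negbTE Q2) /= in Hu2.
    rewrite !flatten_rcons /X in Hu1 Hu2 Ef *.
    rewrite Hu1 Hu2 in Ef *; move/cats1_inj: Ef => Ef.
    by rewrite (GG r1 r2) // ?Q1 ?Q2.
  exists X, Y; split => //.
  split; first by exists [:: a].
  split; first by have [s Es] := Ha _ Hz0; exists s; rewrite /Y -Es.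
  split; first by move=> x -> .
  split; first by move=> y /Hsz; case: y.
  move=> b l1 l2 _ _ H1 H2 /endl_odd Eo Ef.
  case: b H1 H2 => H1 H2; first exact: Godd.
  have : [:: a] :: l1 = [:: a] :: l2.
    by apply: Godd => //=; rewrite ?Eo ?Ef.
  by case.
- pose X := fun x => Z (rcons x a).
  pose Y := fun y : seq A => y = [:: a].
  have HZ : forall w, Z w <-> prod_lang X Y w.
    move=> w; split.
      move=> Hw; have [s Es] := Ha _ Hw; exists s, [:: a]; split.
        by rewrite /X -Es.
      by split => //; rewrite Es cats1.
    by move=> [x [y [Hx [-> ->]]]]; rewrite cats1.
  have Cn : forall x x' y y', X x -> X x' -> Y y -> Y y' -> x ++ y = x' ++ y' -> x = x' /\ y = y'.
    by move=> x x' y y' _ _ -> -> /cats1_inj.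
  have GG := G Hc HZ Cn.
  have Gall : forall l1 l2, alt_fac X Y true l1 -> alt_fac X Y true l2 ->
      odd (size l1) = odd (size l2) -> flatten l1 = flatten l2 -> l1 = l2.
    move=> l1 l2 H1 H2 Eo Ef.
    case O1: (odd (size l1)); last by apply: GG => //; rewrite ?O1 // -Eo O1.
    have : rcons l1 [:: a] = rcons l2 [:: a].
      apply: GG.
      + by apply/alt_rcons; rewrite O1.
      + by apply/alt_rcons; rewrite -Eo O1.
      + by rewrite size_rcons /= O1.
      + by rewrite size_rcons /= -Eo O1.
      + by rewrite !flatten_rcons Ef.
    exact: rcons_injl.
  exists X, Y; split => //.
  split; first by have [s Es] := Ha _ Hz0; exists s; rewrite /X -Es.
  split; first by exists [:: a].
  split; first by move=> x Hx Ex; have := Hsz _ Hx; rewrite size_rcons Ex.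
  split; first by move=> y ->.
  move=> b l1 l2 _ _ H1 H2 /endl_odd Eo Ef.
  case: b H1 H2 => H1 H2; first exact: Gall.
  case: l1 H1 Eo Ef => [|u1 r1]; case: l2 H2 => [|u2 r2] //=.
  - by move=> [-> _].
  - by move=> _ [-> _].
  move=> [-> H2] [-> H1] /negb_inj Eo [Ef].
  by rewrite (Gall r1 r2).
Qed.
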